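(* Let $F$ be a Boolean formula over $n$ variables and $m\ge1$. If $|\mathrm{Sol}(F)|\ge 2^{m+3}$, then $\varphi^F_{holes}(m)$ is true.
   Context: $\mathrm{Sol}(F)\subseteq\{0,1\}^n$ is the set of satisfying assignments of $F$. $\mathcal{H}(n,m,2)$ is a fixed explicit pairwise independent family of hash functions $\{0,1\}^n\to\{0,1\}^m$: for $h$ uniform in the family, distinct $y_1,y_2$ and any $\alpha_1,\alpha_2\in\{0,1\}^m$, $\Pr[h(y_1)=\alpha_1\wedge h(y_2)=\alpha_2]=2^{-2m}$. The formula $\varphi^F_{holes}(m)$ is $\exists h_1,\dots,h_{m+1}\in\mathcal{H}(n,m,2)\ \forall\alpha\in\{0,1\}^m\ \exists z\in\{0,1\}^n:\ \bigvee_{i=1}^{m+1}(F(z)\wedge h_i(z)=\alpha)$, i.e. every $\alpha\in\{0,1\}^m$ is the image of some solution of $F$ under some $h_i$. *)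

(* Defs.v *)
From mathcomp Require Import all_boot.
Set Implicit Arguments. Unset Strict Implicit. Unset Printing Implicit Defensive.

Definition bvec (n : nat) := {ffun 'I_n -> bool}.

(* Sol(F) for a Boolean formula F over n variables, given by its semantics. *)
Definition Sol (n : nat) (F : pred (bvec n)) : {set bvec n} := [set x | F x].

(* A hash family H(n,m,2): index type I (h uniform over I), each index
   giving a function {0,1}^n -> {0,1}^m.  Pairwise independence:
   for distinct y1,y2 and any a1,a2,
   Pr_i[h_i y1 = a1 /\ h_i y2 = a2] = 2^(-2m), i.e.
   #{i | ...} * 2^(2m) = #I  (and the family is nonempty). *)
Definition pairwise_indep (n m : nat) (I : finType) (H : I -> bvec n -> bvec m) :=
  0 < #|I| /\
  forall (y1 y2 : bvec n) (a1 a2 : bvec m), y1 != y2 ->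
    #|[set i : I | (H i y1 == a1) && (H i y2 == a2)]| * 2 ^ (2 * m) = #|I|.

Definition phi_holes (n m : nat) (F : pred (bvec n)) (I : finType)
    (H : I -> bvec n -> bvec m) : Prop :=
  exists hs : 'I_m.+1 -> I,
    forall alpha : bvec m, exists z : bvec n,
      exists i : 'I_m.+1, F z && (H (hs i) z == alpha).

(* Main.v *)
Require Import Defs.
From mathcomp Require Import all_boot zify.

Lemma sumb_card (T : finType) (P : pred T) :
  \sum_(i : T) (P i : nat) = #|[set i | P i]|.
Proof.
rewrite -sum1_card [RHS]big_mkcond /=; apply: eq_bigr => i _.
by rewrite inE; case: (P i).
Qed.

Lemma card_bvec m : #|bvec m| = 2 ^ m.
Proof. by rewrite /bvec card_ffun card_bool card_ord. Qed.

Lemma count1 (n m : nat) (I : finType) (H : I -> bvec n -> bvec m)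
  (y y2 : bvec n) (a : bvec m) :
  pairwise_indep H -> y != y2 ->
  #|[set i | H i y == a]| * 2 ^ m = #|I|.
Proof.
move=> [N0 pH] ny.
have e : #|[set i | H i y == a]| =
   \sum_(a2 : bvec m) #|[set i | (H i y == a) && (H i y2 == a2)]|.
  rewrite -sumb_card.
  under [RHS]eq_bigr do rewrite -sumb_card.
  rewrite exchange_big /=; apply: eq_bigr => i _.
  rewrite (bigD1 (H i y2)) //= eqxx andbT big1 ?addn0 // => a2 ne.
  by rewrite eq_sym in ne; rewrite (negbTE ne) andbF.
have : #|[set i | H i y == a]| * 2 ^ m * 2 ^ m = 2 ^ m * #|I|.
  rewrite -mulnA -expnD addnn -mul2n e big_distrl /=.
  under eq_bigr do rewrite pH //.
  by rewrite sum_nat_const card_bvec.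
move/eqP; rewrite mulnC eqn_pmul2l ?expn_gt0 // mulnC => /eqP //.
Qed.

Lemma bad_small (n m : nat) (F : pred (bvec n)) (I : finType)
    (H : I -> bvec n -> bvec m) (al : bvec m) :
  pairwise_indep H -> 2 ^ (m + 3) <= #|Sol F| ->
  8 * #|[set i | [forall y in Sol F, H i y != al]]| <= #|I|.
Proof.
move=> PH; have [N0 pH] := PH.
set S := Sol F; set B := [set i | _]; set N := #|I|; set s := #|S|; set M := 2 ^ m. move=> hs.
have M0 : 0 < M by rewrite expn_gt0.
have hy2 : forall y : bvec n, exists y2, y != y2.
  move=> y; case: (pickP (fun y2 => y != y2)) => [y2 h|h]; first by exists y2.
  have : s <= 1.
    rewrite -(cards1 y); apply: subset_leq_card; apply/subsetP => x _.
    by rewrite inE eq_sym; have := h x => /= /negbFE.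
  have : 8 <= 2 ^ (m + 3) by rewrite expnD; apply: (leq_pmull (2 ^ 3)); rewrite expn_gt0.
  lia.
have c1 : forall y, #|[set i | H i y == al]| * M = N.
  by move=> y; have [y2 ny] := hy2 y; apply: count1 PH ny.
pose X i := \sum_(y in S) (H i y == al : nat).
have hP : (\sum_i X i) * M = s * N.
  rewrite /X exchange_big /= big_distrl /=.
  under eq_bigr do rewrite sumb_card c1.
  by rewrite sum_nat_const.
have hQ : (\sum_i X i ^ 2) * M ^ 2 <= s * (N * M + s * N).
  have e : forall i, X i ^ 2 = \sum_(y in S) \sum_(y' in S) ((H i y == al) && (H i y' == al) : nat).
    move=> i; rewrite -mulnn /X big_distrl /=; apply: eq_bigr => y _.
    by rewrite big_distrr /=; apply: eq_bigr => y' _; rewrite mulnb.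
  under eq_bigr do rewrite e.
  rewrite exchange_big /=.
  under eq_bigr do rewrite exchange_big /=.
  have -> : s * (N * M + s * N) = \sum_(y in S) (N * M + s * N) by rewrite sum_nat_const.
  rewrite big_distrl /=; apply: leq_sum => y yS.
  rewrite big_distrl /= (bigD1 y) //= sumb_card.
  have -> : [set i | H i y == al & H i y == al] = [set i | H i y == al].
    by apply/setP => i; rewrite !inE andbb.
  rewrite -[M ^ 2]/(M * M) mulnA c1.
  apply: leq_add => //.
  rewrite big_mkcondr /= -sum_nat_const; apply: leq_sum => y' y'S.
  case: ifP => // ne; rewrite sumb_card /M -expnD addnn -mul2n pH //.
  by rewrite eq_sym ne.
pose D i := (X i * M - s) ^ 2 + (s - X i * M) ^ 2.
have hD : (\sum_i X i ^ 2) * M ^ 2 + N * s ^ 2 = 2 * s * ((\sum_i X i) * M) + \sum_i D i.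
  have e : forall i, (X i * M) ^ 2 + s ^ 2 = 2 * s * (X i * M) + D i.
    move=> i; rewrite /D; set a := X i * M.
    case: (leqP a s) => h; nia.
  transitivity (\sum_i ((X i * M) ^ 2 + s ^ 2)).
    rewrite big_split /= sum_nat_const big_distrl /=; congr (_ + _).
      by apply: eq_bigr => i _; rewrite expnMn.
  rewrite (eq_bigr _ (fun i _ => e i)) big_split /=; congr (_ + _).
  by rewrite big_distrl /= big_distrr.
have hB : #|B| * s ^ 2 <= \sum_i D i.
  have -> : B = [set i | i \in B] by apply/setP => i; rewrite inE.
  rewrite -sumb_card big_distrl /=; apply: leq_sum => i _.
  case iB: (i \in B); rewrite /D /=; last by [].
  have -> : X i = 0.
    apply: big1 => y yS; move: iB; rewrite inE => /forall_inP/(_ y yS).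
    by move/negbTE => ->.
  by rewrite /D mul0n sub0n subn0 mul1n.
have h1 : #|B| * s ^ 2 <= s * (N * M).
  rewrite hP in hD; nia.
have s0 : 0 < s by lia.
have h2 : #|B| * s <= N * M.
  nia.
have h3 : 2 ^ (m + 3) = 8 * M by rewrite expnD mulnC.
have : #|B| * (8 * M) <= N * M by apply: leq_trans h2; rewrite leq_mul2l -h3 hs orbT.
move=> h4; nia.
Qed.

Theorem lemma5p2 (n m : nat) (F : pred (bvec n)) (I : finType)
    (H : I -> bvec n -> bvec m) :
  pairwise_indep H -> 1 <= m -> 2 ^ (m + 3) <= #|Sol F| ->
  phi_holes F H.
Proof.
move=> PH _ hs.
pose B (al : bvec m) := [set i | [forall y in Sol F, H i y != al]].
have hB al : 8 * #|B al| <= #|I| := @bad_small _ _ F _ H al PH hs.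
case: (boolP [exists f : {ffun 'I_m.+1 -> I}, [forall al : bvec m, [exists j, f j \notin B al]]]).
  move/existsP => [f /forallP hf]; exists f => al.
  have /existsP [j] := hf al.
  rewrite inE => /forall_inPn [y yS hy].
  exists y, j; move: yS; rewrite inE => ->; by rewrite (negbNE hy).
rewrite negb_exists => /forallP hall; exfalso.
have N0 : 0 < #|I| by case: PH.
have h1 : #|I| ^ (m.+1) <= \sum_(al : bvec m) #|B al| ^ m.+1.
  have -> : #|I| ^ m.+1 = \sum_(f : {ffun 'I_m.+1 -> I}) 1.
    by rewrite sum1_card card_ffun card_ord.
  have -> : \sum_(al : bvec m) #|B al| ^ m.+1 =
            \sum_(al : bvec m) \sum_(f : {ffun 'I_m.+1 -> I}) (f \in ffun_on (B al) : nat).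
    apply: eq_bigr => al _; rewrite sumb_card; have := @card_ffun_on ('I_m.+1) I (B al).
    rewrite card_ord => <-; apply: eq_card => f; by rewrite in_set.
  rewrite [X in _ <= X]exchange_big /=; apply: leq_sum => f _.
  have := hall f; rewrite negb_forall => /existsP [al].
  rewrite negb_exists => /forallP hj.
  rewrite (bigD1 al) //=.
  have -> : f \in ffun_on (B al) by apply/ffun_onP => j; have := hj j; rewrite negbK.
  by [].
have h2 : (\sum_(al : bvec m) #|B al| ^ m.+1) * 8 ^ m.+1 <= 2 ^ m * #|I| ^ m.+1.
  have -> : 2 ^ m * #|I| ^ m.+1 = \sum_(al : bvec m) #|I| ^ m.+1.
    by rewrite sum_nat_const -card_bvec.
  rewrite big_distrl /=; apply: leq_sum => al _.
  by rewrite -expnMn mulnC leq_exp2r.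
have h3 : 2 ^ m < 8 ^ m.+1.
  rewrite -[8]/(2 ^ 3) -expnM ltn_exp2l //; lia.
have h4 : 0 < #|I| ^ m.+1 by rewrite expn_gt0 N0.
have h5 := leq_mul h1 (leqnn (8 ^ m.+1)).
have h6 : 2 ^ m * #|I| ^ m.+1 < 8 ^ m.+1 * #|I| ^ m.+1 by rewrite ltn_pmul2r.
lia.
Qed.
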